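(* Let $D_+, D_-$ be a pair of SBP operators of order $q\ge1$ on $[a,b]$ with associated data $H,S,\mathbf{p}_0,\mathbf{p}_n,\mathbf{x}$, and let $\tilde D_+ = D_+ + H^{-1}\mathbf{p}_0\mathbf{p}_0^\top$. Let $(\lambda,\mathbf{w})$ be an eigenpair of $\tilde D_+$ (over $\mathbb{C}$) with $\operatorname{Re}(\lambda)=0$. Then $\lambda$ is a normal eigenvalue of $\tilde D_+$ with respect to the inner product $\langle \mathbf{f},\mathbf{g}\rangle = \mathbf{f}^* H\mathbf{g}$, i.e.: (a) every eigenvector of $\tilde D_+$ corresponding to $\lambda$ is $\langle\cdot,\cdot\rangle$-orthogonal to every eigenvector of $\tilde D_+$ corresponding to any eigenvalue $\mu\ne\lambda$; and (b) the algebraic multiplicity of $\lambda$ equals its geometric multiplicity.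
   Context: Let $[a,b]$ be an interval with $b>a$ and $n\ge 1$. For $\mathbf{x}\in\mathbb{R}^{n+1}$, $\mathbf{x}^j$ denotes elementwise exponentiation, with $\mathbf{x}^0=\mathbf{1}=(1,\dots,1)^\top$. Matrices $D_+, D_-\in\mathbb{R}^{(n+1)\times(n+1)}$ form a pair of SBP (summation-by-parts) operators of order $q\ge 1$ on $[a,b]$ if there exist matrices $H,S\in\mathbb{R}^{(n+1)\times(n+1)}$ and vectors $\mathbf{p}_0,\mathbf{p}_n,\mathbf{x}\in\mathbb{R}^{n+1}$ such that: (A) $D_\pm \mathbf{x}^j = j\mathbf{x}^{j-1}$, $\mathbf{p}_0^\top\mathbf{x}^j = a^j$, $\mathbf{p}_n^\top \mathbf{x}^j = b^j$ for $j=0,\dots,q$ (with $0\cdot\mathbf{x}^{-1}:=\mathbf{0}$); (B) $H=H^\top$ is positive definite; (C) $HD_+ + D_+^\top H = -\mathbf{p}_0\mathbf{p}_0^\top + \mathbf{p}_n\mathbf{p}_n^\top + S$ with $S=S^\top$ positive semidefinite; (D) $HD_+ + D_-^\top H = -\mathbf{p}_0\mathbf{p}_0^\top + \mathbf{p}_n\mathbf{p}_n^\top$; (E) $\mathbf{x}=(x_0,\dots,x_n)^\top$ with $x_i\ne x_j$ for $i\ne j$. The superscript $*$ denotes conjugate transpose. *)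

(* Defs.v *)
From HB Require Import structures.
From mathcomp Require Import all_boot all_order all_algebra.
Set Implicit Arguments. Unset Strict Implicit. Unset Printing Implicit Defensive.
Import Order.TTheory GRing.Theory Num.Theory.
Local Open Scope ring_scope.

(* Real-valued data are represented inside a numeric closed field C
   (e.g. algC, or complex R) with all entries required to be real. *)

Definition real_mx (C : numClosedFieldType) m k (A : 'M[C]_(m, k)) : Prop :=
  forall i j, A i j \is Num.real.

Definition xpow (C : numClosedFieldType) m (x : 'cV[C]_m) (j : nat) : 'cV[C]_m :=
  \col_i (x i 0 ^+ j).

Definition ctr (C : numClosedFieldType) m k (A : 'M[C]_(m, k)) : 'M[C]_(k, m) :=
  (map_mx Num.conj A)^T.

Definition posdef (C : numClosedFieldType) m (H : 'M[C]_m) : Prop :=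
  forall v : 'cV[C]_m, real_mx v -> v != 0 -> 0 < (v^T *m H *m v) 0 0.
Definition psd (C : numClosedFieldType) m (S : 'M[C]_m) : Prop :=
  forall v : 'cV[C]_m, real_mx v -> 0 <= (v^T *m S *m v) 0 0.

Definition SBP_pair (C : numClosedFieldType) (n q : nat) (a b : C)
  (Dp Dm H S : 'M[C]_n.+1) (p0 pn x : 'cV[C]_n.+1) : Prop :=
  (real_mx Dp /\ real_mx Dm /\ real_mx H /\ real_mx S /\
   real_mx p0 /\ real_mx pn /\ real_mx x) /\
  [/\
      (forall j, (j <= q)%N ->
         [/\ Dp *m xpow x j = j%:R *: xpow x j.-1,
             Dm *m xpow x j = j%:R *: xpow x j.-1,
             p0^T *m xpow x j = (a ^+ j)%:M &
             pn^T *m xpow x j = (b ^+ j)%:M]),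
      H^T = H /\ posdef H,
      H *m Dp + Dp^T *m H = - (p0 *m p0^T) + pn *m pn^T + S
                /\ S^T = S /\ psd S,
      H *m Dp + Dm^T *m H = - (p0 *m p0^T) + pn *m pn^T &
      (forall i j : 'I_n.+1, i != j -> x i 0 != x j 0)].

(* geometric multiplicity of an eigenvalue of a square matrix (column convention) *)
Definition geom_mult (C : numClosedFieldType) m (A : 'M[C]_m) (l : C) : nat :=
  (m - \rank (A - l%:M)%R)%N.

Definition alg_mult (C : numClosedFieldType) m (A : 'M[C]_m) (l : C) : nat :=
  mup l (char_poly A).

(* Main.v *)
Require Import Defs.
From HB Require Import structures.
From mathcomp Require Import all_boot all_order all_algebra.
From mathcomp Require Import ring zify.
Import Order.TTheory GRing.Theory Num.Theory.
Local Open Scope ring_scope.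

Section Helpers.
Set Implicit Arguments. Unset Strict Implicit. Unset Printing Implicit Defensive.

Lemma char_poly_conj (F : fieldType) N (P A : 'M[F]_N) :
  P \in unitmx -> char_poly (P *m A *m invmx P) = char_poly A.
Proof.
move=> Pu; rewrite /char_poly /char_poly_mx.
set mP := map_mx (@polyC F) P; set mPi := map_mx (@polyC F) (invmx P).
have e1 : mP *m mPi = 1%:M by rewrite -map_mxM mulmxV // map_mx1.
have -> : 'X%:M - map_mx polyC (P *m A *m invmx P) =
   mP *m ('X%:M - map_mx polyC A) *m mPi.
  rewrite mulmxBr mulmxBl !map_mxM -/mP -/mPi; congr (_ - _).
  by rewrite mul_mx_scalar -scalemxAl e1 scalemx1.
by rewrite !det_mulmx mulrC mulrA -det_mulmx -map_mxM mulVmx // map_mx1 det1 mul1r.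
Qed.

Lemma rank_unit_mull (F : fieldType) m n (R : 'M[F]_m) (B : 'M[F]_(m, n)) :
  R \in unitmx -> \rank (R *m B) = \rank B.
Proof.
move=> Ru; apply/eqP; rewrite eqn_leq mxrankM_maxr /=.
by rewrite -{1}(mulKmx Ru B) mxrankM_maxr.
Qed.

Lemma char_poly_lblock1 (F : fieldType) n (l : F) (X : 'M[F]_(n, 1)) (E : 'M[F]_n) :
  char_poly (block_mx (l%:M : 'M_1) 0 X E) = ('X - l%:P) * char_poly E.
Proof.
rewrite /char_poly /char_poly_mx (scalar_mx_block 1 n) map_block_mx map_mx0.
rewrite opp_block_mx add_block_mx oppr0 addr0 det_lblock det_mx11 !mxE.
by rewrite mulr1n.
Qed.

Lemma block_step (F : fieldType) n (X : 'M[F]_(n, 1)) (G : 'M[F]_n) :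
  let B := block_mx (0 : 'M_1) 0 X G in
  (forall u : 'rV_(1 + n), u *m B *m B = 0 -> u *m B = 0) ->
  [/\ (forall u : 'rV_n, u *m G *m G = 0 -> u *m G = 0),
      (forall u : 'rV_n, u *m G = 0 -> u *m X = 0) &
      \rank B = \rank G].
Proof.
move=> B hB.
have rB (p : 'rV_1) (q : 'rV_n) : row_mx p q *m B = row_mx (q *m X) (q *m G).
  by rewrite mul_row_block !mulmx0 !add0r.
have hB3 (u : 'rV_(1 + n)) : u *m B *m B *m B = 0 -> u *m B = 0.
  by move=> h; apply: (hB u); apply: (hB (u *m B)); rewrite h.
have hX (u : 'rV_n) : u *m G = 0 -> u *m X = 0.
  move=> uG; have := hB (row_mx 0 u); rewrite !rB uG !mul0mx row_mx0.
  by move=> /(_ erefl); rewrite -[0 in RHS]row_mx0 => /eq_row_mx [].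
split => //.
- move=> u uG2; have := hB3 (row_mx 0 u); rewrite !rB uG2 !mul0mx row_mx0.
  by move=> /(_ erefl); rewrite -[0 in RHS]row_mx0 => /eq_row_mx [].
- have -> : \rank B = \rank (row_mx X G).
    by rewrite /B block_mxEv row_mx0 -addsmxE adds0mx.
  have ek : (kermx (row_mx X G) == kermx G)%MS.
    apply/andP; split; apply/sub_kermxP.
      by have := mulmx_ker (row_mx X G); rewrite mul_mx_row -[0 in RHS]row_mx0 => /eq_row_mx [].
    rewrite mul_mx_row mulmx_ker; apply/eqP; rewrite -row_mx0; apply/eqP.
    congr row_mx; apply/row_matrixP => i; rewrite row_mul row0; apply: hX.
    by rewrite -row_mul mulmx_ker row0.
  have := eqmx_rank ek; rewrite !mxrank_ker.
  have := rank_leq_row (row_mx X G); have := rank_leq_row G. lia.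
Qed.

Lemma key (F : fieldType) N (A : 'M[F]_N) (l : F) :
  (forall u : 'rV_N, u *m (A - l%:M) *m (A - l%:M) = 0 -> u *m (A - l%:M) = 0) ->
  mup l (char_poly A) = (N - \rank (A - l%:M)%R)%N.
Proof.
elim: N A => [|n IH] A hyp.
  by rewrite /char_poly det_mx00 mupNroot // /root hornerC oner_eq0.
have [ev|nev] := boolP (eigenvalue A l); last first.
  rewrite mupNroot -?eigenvalue_root_char //.
  move: nev; rewrite /eigenvalue /eigenspace negbK kermx_eq0 row_free_unit.
  by move=> /mxrank_unit ->; rewrite subnn.
case/eigenvalueP: ev => v vA vnz.
set R := row_ebase v; set c := col_ebase v.
have Ru : R \in unitmx := row_ebase_unit v.
have cu : c \in unitmx := col_ebase_unit v.
pose w : 'rV[F]_(1 + n) := delta_mx 0 0.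
have eV : v = c *m w *m R.
  rewrite -{1}(mulmx_ebase v) rank_rV vnz /= -/R -/c; congr (_ *m _ *m _).
  by apply/matrixP => i j; rewrite !mxE !ord1 eqxx /= andbT eq_sym.
have wR : w *m R *m A = l *: (w *m R).
  apply: (can_inj (mulKmx cu)); rewrite !mulmxA -eV vA eV -scalemxAr.
  by rewrite !mulmxA.
pose M' : 'M[F]_(1 + n) := R *m A *m invmx R.
have wM : w *m M' = l *: w.
  by rewrite /M' !mulmxA wR -scalemxAl mulmxK.
have M'def : M' = R *m A *m invmx R by [].
clearbody M'.
have eM : M' = block_mx (l%:M : 'M_1) 0 (dlsubmx M') (drsubmx M').
  rewrite -{1}(submxK M'); congr block_mx.
    apply/matrixP => i j; rewrite !ord1 !mxE.
    have := congr1 (fun W : 'rV[F]_(1 + n) => W 0 (lshift n 0)) wM; rewrite !mxE.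
    rewrite (bigD1 (lshift n 0)) //= big1 ?addr0.
      by rewrite !mxE eqxx /= mul1r => ->; rewrite mulr1.
    by move=> k kn; rewrite !mxE (negPf (_ : k != 0)) ?andbF ?mul0r //; apply: contraNneq kn => ->; exact/val_inj.
  apply/matrixP => i j; rewrite !ord1 !mxE.
  have := congr1 (fun W : 'rV[F]_(1 + n) => W 0 (rshift 1 j)) wM; rewrite !mxE.
  rewrite (bigD1 (lshift n 0)) //= big1 ?addr0.
    by rewrite !mxE eqxx /= mul1r => ->; rewrite mulr0.
  by move=> k kn; rewrite !mxE (negPf (_ : k != 0)) ?andbF ?mul0r //; apply: contraNneq kn => ->; exact/val_inj.
set X := dlsubmx M'; set E := drsubmx M'.
have eB : R *m (A - l%:M) *m invmx R = block_mx (0 : 'M_1) 0 X (E - l%:M).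
  rewrite mulmxBr mulmxBl -M'def eM mul_mx_scalar -scalemxAl mulmxV //.
  rewrite scalemx1 (scalar_mx_block 1 n) (@opp_block_mx _ 1 n 1 n) (@add_block_mx _ 1 n 1 n).
  by rewrite subrr !oppr0 !addr0.
have hB : forall u : 'rV_(1 + n),
    u *m block_mx (0 : 'M_1) 0 X (E - l%:M) *m block_mx (0 : 'M_1) 0 X (E - l%:M) = 0 ->
    u *m block_mx (0 : 'M_1) 0 X (E - l%:M) = 0.
  move=> u; rewrite -eB !mulmxA mulmxKV // => h.
  have h' : u *m R *m (A - l%:M) *m (A - l%:M) = 0.
    by rewrite -(mulmxKV Ru (_ *m _)) h mul0mx.
  by rewrite (hyp _ h') mul0mx.
have [hE _ rk] := block_step hB.
have IHE := IH E hE.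
rewrite -(char_poly_conj A Ru) -M'def eM char_poly_lblock1.
rewrite mupM ?polyXsubC_eq0 ?monic_neq0 ?char_poly_monic //.
rewrite -[('X - l%:P)]expr1 mup_XsubCX eqxx IHE.
have -> : \rank (A - l%:M) = \rank (block_mx (0 : 'M_1) 0 X (E - l%:M)).
  rewrite -eB mxrankMfree ?row_free_unit ?unitmx_inv // rank_unit_mull //.
rewrite rk; have := rank_leq_row (E - l%:M). lia.
Qed.

Section RealLemmas.
Variable C : numClosedFieldType.

Lemma real_mxM m k p (A : 'M[C]_(m, k)) (B : 'M[C]_(k, p)) :
  real_mx A -> real_mx B -> real_mx (A *m B).
Proof.
move=> rA rB i j; rewrite !mxE; apply: rpred_sum => l _; exact: rpredM.
Qed.
Lemma real_mxD m k (A B : 'M[C]_(m, k)) :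
  real_mx A -> real_mx B -> real_mx (A + B).
Proof. by move=> rA rB i j; rewrite !mxE; apply: rpredD. Qed.
Lemma real_mxN m k (A : 'M[C]_(m, k)) : real_mx A -> real_mx (- A).
Proof. by move=> rA i j; rewrite !mxE rpredN. Qed.
Lemma real_mxT m k (A : 'M[C]_(m, k)) : real_mx A -> real_mx A^T.
Proof. by move=> rA i j; rewrite !mxE. Qed.
Lemma real_mxZ m k (c : C) (A : 'M[C]_(m, k)) :
  c \is Num.real -> real_mx A -> real_mx (c *: A).
Proof. by move=> rc rA i j; rewrite !mxE; apply: rpredM. Qed.
Lemma real_delta m k (i0 : 'I_m) (j0 : 'I_k) : real_mx (delta_mx i0 j0 : 'M[C]_(m, k)).
Proof. by move=> i j; rewrite !mxE; apply: realn. Qed.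

Lemma ctrM m k p (A : 'M[C]_(m, k)) (B : 'M[C]_(k, p)) :
  ctr (A *m B) = ctr B *m ctr A.
Proof. by rewrite /ctr map_mxM trmx_mul. Qed.
Lemma ctrD m k (A B : 'M[C]_(m, k)) : ctr (A + B) = ctr A + ctr B.
Proof. by apply/matrixP => i j; rewrite !mxE rmorphD. Qed.
Lemma ctrZ m k (c : C) (A : 'M[C]_(m, k)) : ctr (c *: A) = c^* *: ctr A.
Proof. by apply/matrixP => i j; rewrite !mxE rmorphM. Qed.
Lemma ctr_real m k (A : 'M[C]_(m, k)) : real_mx A -> ctr A = A^T.
Proof. by move=> rA; apply/matrixP => i j; rewrite !mxE conj_Creal. Qed.

Definition reV m (w : 'cV[C]_m) : 'cV[C]_m := map_mx (fun z => 'Re z) w.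
Definition imV m (w : 'cV[C]_m) : 'cV[C]_m := map_mx (fun z => 'Im z) w.
Lemma real_reV m (w : 'cV[C]_m) : real_mx (reV w).
Proof. by move=> i j; rewrite !mxE Creal_Re. Qed.
Lemma real_imV m (w : 'cV[C]_m) : real_mx (imV w).
Proof. by move=> i j; rewrite !mxE Creal_Im. Qed.
Lemma reV_imV m (w : 'cV[C]_m) : w = reV w + 'i *: imV w.
Proof. by apply/matrixP => i j; rewrite !mxE -Crect. Qed.

Definition qf m (T : 'M[C]_m) (v : 'cV[C]_m) : C := (v^T *m T *m v) 0 0.

Lemma mx11_tr (M : 'M[C]_1) : M^T 0 0 = M 0 0.
Proof. by rewrite mxE. Qed.

Lemma qf_split m (T : 'M[C]_m) (w : 'cV[C]_m) :
  real_mx T -> T^T = T ->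
  (ctr w *m T *m w) 0 0 = qf T (reV w) + qf T (imV w).
Proof.
move=> rT sT; set a := reV w; set b := imV w.
have -> : ctr w = a^T - 'i *: b^T.
  have ra := real_reV w; have rb := real_imV w.
  rewrite {1}(reV_imV w) ctrD ctrZ !ctr_real // (conjCi C).
  by rewrite scaleNr.
rewrite [X in _ *m X](reV_imV w) -/a -/b.
have eab : (b^T *m T *m a) 0 0 = (a^T *m T *m b) 0 0.
  by rewrite -mx11_tr !trmx_mul trmxK sT mulmxA.
rewrite !mulmxBl !mulmxDr -!scalemxAl -!scalemxAr.
move: eab; rewrite /qf -/a -/b.
move: (a^T *m T *m a) (a^T *m T *m b) (b^T *m T *m a) (b^T *m T *m b) => P1 P2 P3 P4 e.
rewrite !mxE e mulrA -expr2 sqrCi mulN1r.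
ring.
Qed.

Lemma qf_zero m (T : 'M[C]_m) (a : 'cV[C]_m) :
  real_mx T -> T^T = T -> (forall c, real_mx c -> 0 <= qf T c) ->
  real_mx a -> qf T a = 0 -> T *m a = 0.
Proof.
move=> rT sT psd ra qa; apply/matrixP => j k; rewrite ord1 [RHS]mxE.
set be := (T *m a) j 0.
pose c : 'cV[C]_m := delta_mx j 0.
have rc : real_mx c by exact: real_delta.
set ga := qf T c.
have rbe : be \is Num.real by apply: (real_mxM rT ra).
have rga : ga \is Num.real by apply: (real_mxM (real_mxM (real_mxT rc) rT) rc).
have ga0 : 0 <= ga by apply: psd.
pose d := (ga + 1) *: a - be *: c.
have rd : real_mx d.
  apply: real_mxD; first by apply: real_mxZ => //; apply: rpredD => //; apply: rpred1.
  by apply: real_mxN; apply: real_mxZ.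
have e1 : (c^T *m T *m a) 0 0 = be.
  by rewrite -mulmxA /c trmx_delta -rowE mxE.
have e2 : (a^T *m T *m c) 0 0 = be.
  by rewrite -e1 -mx11_tr !trmx_mul trmxK sT mulmxA.
have qd : qf T d = - (be ^+ 2 * (ga + 2%:R)).
  rewrite /qf; have -> : d^T = (ga + 1) *: a^T - be *: c^T.
    by apply/matrixP => i i'; rewrite !mxE.
  rewrite /d !mulmxBl !mulmxBr -!scalemxAl -!scalemxAr.
  move: e1 e2 qa; rewrite /ga /qf.
  move: (a^T *m T *m a) (a^T *m T *m c) (c^T *m T *m a) (c^T *m T *m c) => P1 P2 P3 P4 e1 e2 qa.
  rewrite !mxE e1 e2 qa.
  ring.
have h1 : 0 <= be ^+ 2 * (ga + 2%:R).
  apply: mulr_ge0; first by rewrite -real_normK // exprn_ge0 // normr_ge0.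
  by apply: addr_ge0 => //; apply: ler0n.
have h2 : be ^+ 2 * (ga + 2%:R) = 0.
  apply/eqP; rewrite eq_le h1 andbT -oppr_ge0 -qd; exact: psd.
move: h2 => /eqP; rewrite mulf_eq0 => /orP [|].
  by rewrite expf_eq0 /= => /eqP.
have g2 : 0 < ga + 2%:R by apply: ltr_wpDl => //; apply: ltr0Sn.
by rewrite (gt_eqF g2).
Qed.

Lemma cqf_zero m (T : 'M[C]_m) (w : 'cV[C]_m) :
  real_mx T -> T^T = T -> (forall c, real_mx c -> 0 <= qf T c) ->
  (ctr w *m T *m w) 0 0 = 0 -> T *m w = 0.
Proof.
move=> rT sT psd; rewrite qf_split // => /eqP.
have h0a := psd _ (real_reV w); have h0b := psd _ (real_imV w).
rewrite paddr_eq0 // => /andP [/eqP ha /eqP hb].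
rewrite (reV_imV w) mulmxDr -scalemxAr.
by rewrite (qf_zero rT sT psd (real_reV w) ha) (qf_zero rT sT psd (real_imV w) hb) scaler0 addr0.
Qed.

Lemma cposdef m (H : 'M[C]_m) (w : 'cV[C]_m) :
  real_mx H -> H^T = H -> posdef H ->
  (ctr w *m H *m w) 0 0 = 0 -> w = 0.
Proof.
move=> rH sH pH.
have psd c : real_mx c -> 0 <= qf H c.
  move=> rc; have [->|cn] := eqVneq c 0; last by apply/ltW/pH.
  by rewrite /qf mulmx0 mxE.
have z c : real_mx c -> qf H c = 0 -> c = 0.
  move=> rc qc; have [//|cn] := eqVneq c 0.
  by have := pH c rc cn; rewrite -/(qf H c) qc ltxx.
rewrite qf_split // => /eqP.
have h0a := psd _ (real_reV w); have h0b := psd _ (real_imV w).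
rewrite paddr_eq0 // => /andP [/eqP ha /eqP hb].
by rewrite (reV_imV w) (z _ (real_reV w) ha) (z _ (real_imV w) hb) scaler0 addr0.
Qed.
End RealLemmas.

Lemma char_poly_tr (F : fieldType) N (A : 'M[F]_N) : char_poly A^T = char_poly A.
Proof.
rewrite /char_poly -det_tr /char_poly_mx; congr (\det _).
by apply/matrixP => i j; rewrite !mxE eq_sym.
Qed.

Lemma qf_outer (C : numClosedFieldType) m (p c : 'cV[C]_m) :
  real_mx p -> real_mx c -> 0 <= qf (p *m p^T) c.
Proof.
move=> rp rc; rewrite /qf !mulmxA -mulmxA.
have -> : (c^T *m p *m (p^T *m c)) 0 0 = (c^T *m p) 0 0 * (p^T *m c) 0 0.
  by rewrite mxE big_ord1.
have -> : (c^T *m p) 0 0 = (p^T *m c) 0 0 by rewrite -mx11_tr trmx_mul trmxK.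
have r : (p^T *m c) 0 0 \is Num.real by apply: real_mxM => //; apply: real_mxT.
by rewrite -expr2 -real_normK // exprn_ge0 // normr_ge0.
Qed.

Lemma qfD (C : numClosedFieldType) m (A B : 'M[C]_m) (c : 'cV[C]_m) :
  qf (A + B) c = qf A c + qf B c.
Proof. by rewrite /qf mulmxDr mulmxDl mxE. Qed.

End Helpers.

Theorem lemma3 (C : numClosedFieldType) (n q : nat) (a b : C)
  (Dp Dm H S : 'M[C]_n.+1) (p0 pn x : 'cV[C]_n.+1)
  (lam : C) (w : 'cV[C]_n.+1) :
  (1 <= n)%N -> (1 <= q)%N ->
  a \is Num.real -> b \is Num.real -> a < b ->
  @SBP_pair C n q a b Dp Dm H S p0 pn x ->
  let Dt := Dp + invmx H *m p0 *m p0^T in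
  w != 0 -> Dt *m w = lam *: w -> 'Re lam = 0 ->
  (forall (v u : 'cV[C]_n.+1) (mu : C),
      v != 0 -> Dt *m v = lam *: v ->
      u != 0 -> Dt *m u = mu *: u -> mu != lam ->
      ctr v *m H *m u = 0)
  /\ alg_mult Dt lam = geom_mult Dt lam.
Proof.
move=> _ _ _ _ _ [[rDp [_ [rH [rS [rp0 [rpn _]]]]]] [_ [Hsym Hpd] [hC [Ssym Spsd]] _ _]].
move=> Dt _ _ hRe.
have Hu : H \in unitmx.
  rewrite unitmxE unitfE; apply/negP => /det0P [v vn vH].
  have : v^T = 0.
    have /(_ (v^T)) := cposdef rH Hsym Hpd; apply.
    by rewrite -mulmxA -Hsym -trmx_mul vH trmx0 mulmx0 mxE.
  by move/eqP; rewrite trmx_eq0 (negPf vn).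
have Kdef : H *m Dt = H *m Dp + p0 *m p0^T.
  by rewrite /Dt mulmxDr !mulmxA mulmxV // mul1mx.
have rK : real_mx (H *m Dt).
  by rewrite Kdef; apply: real_mxD; apply: real_mxM => //; apply: real_mxT.
pose M := H *m Dt + (H *m Dt)^T.
have rM : real_mx M by apply: real_mxD => //; apply: real_mxT.
have sM : M^T = M by rewrite /M linearD /= trmxK addrC.
have Meq : M = p0 *m p0^T + pn *m pn^T + S.
  have -> : M = (H *m Dp + Dp^T *m H) + (p0 *m p0^T + p0 *m p0^T).
    by rewrite /M Kdef linearD /= !trmx_mul !trmxK Hsym addrACA.
  rewrite hC; clear -C; move: (p0 *m p0^T) (pn *m pn^T) S => P Q S'.
  by apply/matrixP => i j; rewrite !mxE; ring.
have psdM c : real_mx c -> 0 <= qf M c.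
  move=> rc; rewrite Meq !qfD.
  apply: addr_ge0; [apply: addr_ge0|]; first by apply: qf_outer.
    by apply: qf_outer.
  by apply: Spsd.
have lc : lam^* = - lam.
  move: hRe; rewrite ReE => /eqP; rewrite mulf_eq0 invr_eq0 pnatr_eq0 orbF.
  by rewrite addrC addr_eq0 => /eqP.
have ctrH : ctr H = H by rewrite ctr_real.
have hE (z : 'cV[C]_n.+1) : Dt *m z = lam *: z -> ctr z *m H *m Dt = lam *: (ctr z *m H).
  move=> hz.
  have Kz : H *m Dt *m z = lam *: (H *m z) by rewrite -mulmxA hz scalemxAr.
  have KT : ctr z *m (H *m Dt)^T = lam^* *: (ctr z *m H).
    by rewrite -(ctr_real rK) -ctrM Kz ctrZ ctrM ctrH.
  have Mz : M *m z = 0.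
    have /(_ z) := cqf_zero rM sM psdM; apply.
    rewrite /M mulmxDr mulmxDl KT -scalemxAl !mulmxA -(mulmxA _ H Dt).
    rewrite -mulmxA Kz -scalemxAr -!mulmxA -scalerDl lc subrr scale0r mxE.
    done.
  have cM : ctr z *m M = 0 by rewrite -[M]sM -(ctr_real rM) -ctrM Mz /ctr map_mx0 trmx0.
  move: cM; rewrite /M mulmxDr KT lc scaleNr => /eqP; rewrite addr_eq0 opprK.
  by rewrite mulmxA => /eqP.
split.
  move=> v u mu _ hv _ hu mul.
  have e1 := congr1 (mulmx^~ u) (hE v hv); move: e1 => /=.
  rewrite -mulmxA hu -!scalemxAr -scalemxAl => /eqP; rewrite -subr_eq0 -scalerBl.
  by rewrite scaler_eq0 subr_eq0 (negPf mul) => /eqP.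
rewrite /alg_mult /geom_mult -char_poly_tr -mxrank_tr.
have -> : (Dt - lam%:M)^T = Dt^T - lam%:M by rewrite linearB /= tr_scalar_mx.
apply: key => u.
set B := Dt - lam%:M.
have BT : Dt^T - lam%:M = B^T by rewrite linearB /= tr_scalar_mx.
rewrite BT => h.
have h2 : B *m (B *m u^T) = 0.
  by apply: trmx_inj; rewrite trmx0 !trmx_mul trmxK.
set z := B *m u^T.
have hz : Dt *m z = lam *: z.
  by apply/eqP; rewrite -subr_eq0 -mul_scalar_mx -mulmxBl -/B h2.
have z0 : z = 0.
  have /(_ z) := cposdef rH Hsym Hpd; apply.
  rewrite {2}/z /B mulmxBl mulmxBr mulmxA (hE z hz) mul_scalar_mx.
  by rewrite -scalemxAl -!mulmxA -scalemxAr -scalemxAr subrr mxE.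
by rewrite -(trmxK u) -trmx_mul -/z z0 trmx0.
Qed.
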